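(* Let $\varPhi\subset\mathbb{E}^3$ be a skew ruled surface with invariants $\delta,\kappa,\lambda$, right normalized with support function $q=\frac{f(u)+g(u)v}{w}$, neither $f$ nor $g$ the zero function. Then the Tchebychev vector field $\overline{T}$ is incompressible with respect to the first fundamental form of $\varPhi$ (i.e. $\operatorname{div}^I\overline{T}=0$) if and only if $\varPhi$ is conoidal with constant distribution parameter $\delta=c_2\neq0$, $g$ is a nonvanishing constant $c_1$, and $f=c_1c_2\int\lambda\,\mathrm{d}u+c_3$, $c_3\in\mathbb{R}$.
   Context: $\varPhi$ is a ruled $C^r$-surface ($r\ge3$) with nonvanishing Gaussian curvature, in standard parameters $\overline{x}(u,v)=\overline{s}(u)+v\,\overline{e}(u)$, $|\overline{e}|=|\overline{e}'|=1$, $\langle\overline{s}',\overline{e}'\rangle=0$. Frame $\overline{n}=\overline{e}'$, $\overline{z}=\overline{e}\times\overline{n}$. Invariants: distribution parameter $\delta=(\overline{s}',\overline{e},\overline{e}')\neq0$, $\kappa=(\overline{e},\overline{e}',\overline{e}'')$, $\lambda=\cot\sphericalangle(\overline{e},\overline{s}')$, $\overline{s}'=\delta\lambda\overline{e}+\delta\overline{z}$. Conoidal means $\kappa\equiv0$. $w=\sqrt{\delta^2+v^2}$ (so $w^2$ is the discriminant of the first fundamental form), $\overline{\xi}=(\delta\overline{n}-v\overline{z})/w$. $h_{11}=-(\kappa w^2+\delta'v-\delta^2\lambda)/w$, $h_{12}=\delta/w$, $h_{22}=0$. A relative normalization is determined by its support function $q=\langle\overline{\xi},\overline{y}\rangle\neq0$;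 right normalization: $q=(f+gv)/w$, $f,g$ functions of $u$. Relative metric $G_{ij}=q^{-1}h_{ij}$, Darboux tensor $A_{ijk}=q^{-1}\langle\overline{\xi},\nabla^G_k\nabla^G_j\overline{x}_{/i}\rangle$, Tchebychev vector $\overline{T}=T^m\overline{x}_{/m}$, $T^m=\frac12A_i^{\ im}$; equivalently $T^1=\frac{w^2q_{/2}+vq}{\delta w}$, $T^2=\frac{2\delta w^2q_{/1}+\delta'q(\delta^2-v^2)}{2\delta^2w}+\frac{T^1(\kappa w^2+\delta'v-\delta^2\lambda)}{\delta}$. The divergence with respect to the first fundamental form is $\operatorname{div}^I\overline{T}=\frac{(wT^i)_{/i}}{w}$ (sum over $i$, $_{/1}=\partial_u$, $_{/2}=\partial_v$). $\int\cdots\mathrm{d}u$ denotes an antiderivative. *)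

(* Defs.v *)
From Stdlib Require Import Reals.
From Coquelicot Require Import Coquelicot.
Open Scope R_scope.

Definition vec := (R * R * R)%type.
Definition v1 (x : vec) : R := fst (fst x).
Definition v2 (x : vec) : R := snd (fst x).
Definition v3 (x : vec) : R := snd x.
Definition dot (x y : vec) : R := v1 x * v1 y + v2 x * v2 y + v3 x * v3 y.
Definition cross (x y : vec) : vec :=
  ((v2 x * v3 y - v3 x * v2 y, v3 x * v1 y - v1 x * v3 y),
    v1 x * v2 y - v2 x * v1 y).
Definition det3 (x y z : vec) : R := dot x (cross y z).

Definition vD (h : R -> vec) (u : R) : vec :=
  ((Derive (fun t => v1 (h t)) u, Derive (fun t => v2 (h t)) u),
    Derive (fun t => v3 (h t)) u).

Definition inI (a b : Rbar) (u : R) : Prop := Rbar_lt a u /\ Rbar_lt u b.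

Definition C3_on (a b : Rbar) (h : R -> R) : Prop :=
  forall u, inI a b u ->
    (forall k : nat, (k < 3)%nat -> ex_derive (Derive_n h k) u) /\
    continuous (Derive_n h 3) u.

Definition C3_curve_on (a b : Rbar) (h : R -> vec) : Prop :=
  C3_on a b (fun t => v1 (h t)) /\ C3_on a b (fun t => v2 (h t)) /\
  C3_on a b (fun t => v3 (h t)).

(** Standard parameters of x(u,v) = s(u) + v e(u) on u in (a,b):
    |e| = |e'| = 1 and <s', e'> = 0. *)
Definition standard_params (a b : Rbar) (s e : R -> vec) : Prop :=
  forall u, inI a b u ->
    dot (e u) (e u) = 1 /\ dot (vD e u) (vD e u) = 1 /\
    dot (vD s u) (vD e u) = 0.

Definition delta (s e : R -> vec) (u : R) : R := det3 (vD s u) (e u) (vD e u).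
Definition kappa (e : R -> vec) (u : R) : R := det3 (e u) (vD e u) (vD (vD e) u).
(** lambda is defined through s' = delta lambda e + delta z, i.e.
    <s', e> = delta * lambda. *)
Definition lambda (s e : R -> vec) (u : R) : R := dot (vD s u) (e u) / delta s e u.

Definition wf (s e : R -> vec) (u v : R) : R := sqrt (delta s e u ^ 2 + v ^ 2).

Definition qf (s e : R -> vec) (f g : R -> R) (u v : R) : R :=
  (f u + g u * v) / wf s e u v.

Definition q_u (s e : R -> vec) (f g : R -> R) (u v : R) : R :=
  Derive (fun t => qf s e f g t v) u.
Definition q_v (s e : R -> vec) (f g : R -> R) (u v : R) : R :=
  Derive (fun t => qf s e f g u t) v.

Definition T1 (s e : R -> vec) (f g : R -> R) (u v : R) : R :=
  let w := wf s e u v in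
  (w ^ 2 * q_v s e f g u v + v * qf s e f g u v) / (delta s e u * w).

Definition T2 (s e : R -> vec) (f g : R -> R) (u v : R) : R :=
  let w := wf s e u v in
  let d := delta s e u in
  let d' := Derive (delta s e) u in
  (2 * d * w ^ 2 * q_u s e f g u v + d' * qf s e f g u v * (d ^ 2 - v ^ 2))
    / (2 * d ^ 2 * w)
  + T1 s e f g u v * (kappa e u * w ^ 2 + d' * v - d ^ 2 * lambda s e u) / d.

Definition divI_T (s e : R -> vec) (f g : R -> R) (u v : R) : R :=
  (Derive (fun t => wf s e t v * T1 s e f g t v) u
   + Derive (fun t => wf s e u t * T2 s e f g u t) v) / wf s e u v.

(* Main.v *)
Require Import Defs.
From Stdlib Require Import Reals Lra Lia.
From Coquelicot Require Import Coquelicot.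
Open Scope R_scope.

Lemma sqrt_pos' x : 0 < x -> sqrt x <> 0.
Proof. intros; apply Rgt_not_eq, sqrt_lt_R0; auto. Qed.

Ltac sq_norm := repeat match goal with |- context[?x*(?x*1)] => replace (x*(x*1)) with (x^2) by ring end.

Lemma T1_eq s e f g t v : delta s e t <> 0 -> T1 s e f g t v = g t / delta s e t.
Proof.
  intros Hd. unfold T1, q_v, qf, wf. set (D := delta s e t).
  assert (HX : 0 < D^2 + v^2) by (assert (0 < D^2) by (apply pow2_gt_0; auto); nra).
  assert (Hw := sqrt_pos' _ HX).
  rewrite (is_derive_unique _ _ ((g t * sqrt (D^2+v^2)^2 - (f t + g t * v) * v)/ sqrt (D^2+v^2)^3)).
  2:{ auto_derive; sq_norm. tauto. field. auto. }
  field. auto.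
Qed.

Lemma T2_eq s e f g u v : delta s e u <> 0 -> ex_derive (delta s e) u -> ex_derive f u -> ex_derive g u ->
  T2 s e f g u v =
  let D := delta s e u in let D1 := Derive (delta s e) u in
  let f1 := Derive f u in let g1 := Derive g u in
  let K := kappa e u in let L := lambda s e u in
  (f1 / D - D1 * f u / (2 * D^2) + g u * K - g u * L)
  + (g1 / D + g u * D1 / (2 * D^2)) * v + (g u * K / D^2) * v^2.
Proof.
  intros Hd HdD Hf Hg. unfold T2.
  rewrite T1_eq; auto. unfold q_u, qf, wf. cbv zeta.
  set (D := delta s e u). set (D1 := Derive (delta s e) u).
  set (f1 := Derive f u). set (g1 := Derive g u).
  assert (HX : 0 < D^2 + v^2) by (assert (0 < D^2) by (apply pow2_gt_0; auto); nra).
  assert (Hw := sqrt_pos' _ HX).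
  assert (Hw2 : sqrt (D^2+v^2) ^2 = D^2+v^2) by (rewrite pow2_sqrt; lra).
  rewrite (is_derive_unique _ _ (((f1 + g1 * v) * sqrt (D^2+v^2)^2 - (f u + g u * v) * D * D1)/ sqrt (D^2+v^2)^3)).
  2:{ auto_derive; change (fun x:R => f x) with f; change (fun x:R => g x) with g; change (fun x:R => delta s e x) with (delta s e); fold D D1 f1 g1; sq_norm. tauto. field. auto. }
  replace (D^2 - v^2) with (2 * D^2 - sqrt (D^2+v^2)^2) by (rewrite Hw2; ring).
  replace (kappa e u * sqrt (D^2+v^2)^2) with (kappa e u * (D^2+v^2)) by (rewrite Hw2; ring).
  field. auto.
Qed.

Lemma div_eq s e f g u v : delta s e u <> 0 ->
  locally u (fun t => delta s e t <> 0) ->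
  ex_derive (delta s e) u -> ex_derive f u -> ex_derive g u ->
  divI_T s e f g u v =
  let D := delta s e u in let D1 := Derive (delta s e) u in
  let f1 := Derive f u in let g1 := Derive g u in
  let K := kappa e u in let L := lambda s e u in
  let A := f1 / D - D1 * f u / (2 * D^2) + g u * K - g u * L in
  let B := g1 / D + g u * D1 / (2 * D^2) in
  let C := g u * K / D^2 in
  (D1 * g u + v * (A + B * v + C * v^2)) / (D^2 + v^2) + (g1 / D - g u * D1 / D^2 + B + 2 * C * v).
Proof.
  intros Hd Hloc HdD Hf Hg. unfold divI_T. cbv zeta.
  set (D := delta s e u). set (D1 := Derive (delta s e) u).
  set (f1 := Derive f u). set (g1 := Derive g u).
  set (K := kappa e u). set (L := lambda s e u).
  assert (HX : 0 < D^2 + v^2) by (assert (0 < D^2) by (apply pow2_gt_0; auto); nra).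
  assert (Hw := sqrt_pos' _ HX).
  assert (Hw2 : sqrt (D^2+v^2) ^2 = D^2+v^2) by (rewrite pow2_sqrt; lra).
  rewrite (Derive_ext_loc _ (fun t => sqrt (delta s e t ^2 + v^2) * (g t / delta s e t))).
  2:{ apply (filter_imp (fun t => delta s e t <> 0)); auto. intros t Ht. rewrite T1_eq; auto. }
  rewrite (Derive_ext (fun t => wf s e u t * T2 s e f g u t) (fun t => sqrt (D^2 + t^2) * 
     ((f1 / D - D1 * f u / (2 * D^2) + g u * K - g u * L)
      + (g1 / D + g u * D1 / (2 * D^2)) * t + (g u * K / D^2) * t^2))).
  2:{ intros t. unfold wf. rewrite T2_eq; auto. }
  rewrite (is_derive_unique _ _ (D * D1 / sqrt (D^2+v^2) * (g u / D) + sqrt (D^2+v^2) * (g1 / D - g u * D1 / D^2))).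
  2:{ auto_derive; change (fun x:R => g x) with g; change (fun x:R => delta s e x) with (delta s e); fold D D1 g1; sq_norm. tauto. field. auto. }
  rewrite (is_derive_unique (fun t => sqrt (D^2 + t^2) * _) _ (v / sqrt (D^2+v^2) * 
     ((f1 / D - D1 * f u / (2 * D^2) + g u * K - g u * L)
      + (g1 / D + g u * D1 / (2 * D^2)) * v + (g u * K / D^2) * v^2)
     + sqrt (D^2+v^2) * ((g1 / D + g u * D1 / (2 * D^2)) + 2 * (g u * K / D^2) * v))).
  2:{ auto_derive; sq_norm. tauto. field. auto. }
  unfold wf; fold D; set (w := sqrt (D^2+v^2)) in *. rewrite <- Hw2. field. auto.
Qed.

Definition exv (h : R -> vec) u := ex_derive (fun t => v1 (h t)) u /\ ex_derive (fun t => v2 (h t)) u /\ ex_derive (fun t => v3 (h t)) u.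

Lemma exd_pm (F G : R -> R) u : ex_derive F u -> ex_derive G u -> ex_derive (fun t => F t * G t) u.
Proof. intros; apply ex_derive_mult; auto. Qed.
Lemma exd_mm (F G : R -> R) u : ex_derive F u -> ex_derive G u -> ex_derive (fun t => F t - G t) u.
Proof. intros H1 H2; exact (ex_derive_minus F G u H1 H2). Qed.
Lemma exd_pp (F G : R -> R) u : ex_derive F u -> ex_derive G u -> ex_derive (fun t => F t + G t) u.
Proof. intros H1 H2; exact (ex_derive_plus F G u H1 H2). Qed.

Lemma exv_cross x y u : exv x u -> exv y u -> exv (fun t => cross (x t) (y t)) u.
Proof.
  intros [a1 [a2 a3]] [b1 [b2 b3]]; unfold exv, cross, v1, v2, v3; simpl;
  unfold v1, v2, v3 in *; repeat split; apply exd_mm; apply exd_pm; auto.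
Qed.

Lemma exv_dot x y u : exv x u -> exv y u -> ex_derive (fun t => dot (x t) (y t)) u.
Proof.
  intros [a1 [a2 a3]] [b1 [b2 b3]]; unfold dot.
  apply exd_pp; [apply exd_pp|]; apply exd_pm; auto.
Qed.

Lemma exd s e u : exv (vD s) u -> exv e u -> exv (vD e) u -> ex_derive (delta s e) u.
Proof. intros. unfold delta, det3. apply exv_dot; auto. apply exv_cross; auto. Qed.

Lemma inI_open a b : open (inI a b).
Proof. unfold inI. apply open_and; [apply open_Rbar_gt | apply open_Rbar_lt]. Qed.

Lemma inI_loc a b u : inI a b u -> locally u (inI a b).
Proof. intro H; apply inI_open; auto. Qed.

Lemma inI_conv a b x y z : inI a b x -> inI a b y -> x <= z <= y -> inI a b z.
Proof. destruct a, b; unfold inI; simpl; intuition lra. Qed.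

Lemma inI_ex a b : Rbar_lt a b -> exists x, inI a b x.
Proof.
  destruct a as [a| |], b as [b| |]; simpl; intro H; try contradiction.
  - exists ((a+b)/2); unfold inI; simpl; lra.
  - exists (a+1); unfold inI; simpl; lra.
  - exists (b-1); unfold inI; simpl; lra.
  - exists 0; unfold inI; simpl; auto.
Qed.

Lemma inI_ex2 a b : Rbar_lt a b -> exists x y, x < y /\ inI a b x /\ inI a b y.
Proof.
  intro H. destruct (inI_ex a b H) as [y Hy].
  destruct (inI_ex a y (proj1 Hy)) as [x Hx].
  exists x, y. destruct Hx as [H1 H2]. simpl in H2. repeat split; auto; try apply Hy.
  destruct b as [b| |]; destruct Hy as [_ Hy]; simpl in *; auto; lra.
Qed.

Lemma const_on a b h : (forall u, inI a b u -> is_derive h u 0) ->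
  forall x y, inI a b x -> inI a b y -> h x = h y.
Proof.
  intros Hd x y Hx Hy.
  assert (Hin : forall t, Rmin x y <= t <= Rmax x y -> inI a b t).
  { intros t Ht. destruct (Rle_dec x y).
    - rewrite Rmin_left, Rmax_right in Ht by lra. apply (inI_conv a b x y); auto.
    - rewrite Rmin_right, Rmax_left in Ht by lra. apply (inI_conv a b y x); auto. }
  destruct (MVT_gen h x y (fun _ => 0)) as [c [_ Hc]].
  - intros t Ht; apply Hd, Hin; lra.
  - intros t Ht. apply continuity_pt_filterlim. apply (ex_derive_continuous (K:=R_AbsRing) (V:=R_NormedModule) h t).
    eexists; apply Hd, Hin; auto.
  - lra.
Qed.

Lemma cubic c d (p0 p1 p2 p3 : R) : Rbar_lt c d ->
  (forall v, inI c d v -> p0 + p1 * v + p2 * v^2 + p3 * v^3 = 0) ->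
  p0 = 0 /\ p1 = 0 /\ p2 = 0 /\ p3 = 0.
Proof.
  intros Hcd HP. destruct (inI_ex2 c d Hcd) as [x [y [Hxy [Hx Hy]]]].
  set (h := (y - x)/4).
  assert (Hh : 0 < h) by (unfold h; lra).
  assert (Q0 := HP x Hx).
  assert (Q1 := HP (x + h) ltac:(apply (inI_conv c d x y); auto; unfold h; lra)).
  assert (Q2 := HP (x + 2*h) ltac:(apply (inI_conv c d x y); auto; unfold h; lra)).
  assert (Q3 := HP (x + 3*h) ltac:(apply (inI_conv c d x y); auto; unfold h; lra)).
  clearbody h.
  assert (E3 : 6 * p3 * h^3 = 0).
  {     set (P := fun v => p0 + p1 * v + p2 * v^2 + p3 * v^3).
    transitivity (P (x+3*h) - 3 * P (x+2*h) + 3 * P (x+h) - P x); [unfold P; ring|].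
    unfold P; rewrite Q0, Q1, Q2, Q3; ring. }
  assert (h3 : h^3 <> 0) by (apply pow_nonzero; lra).
  assert (Hp3 : p3 = 0) by (apply Rmult_eq_reg_r with (6 * h^3); [lra|nra]).
  subst p3.
  assert (E2 : 2 * p2 * h^2 = 0).
  { transitivity ((p0 + p1 * (x+2*h) + p2 * (x+2*h)^2 + 0 * (x+2*h)^3) - 2 * (p0 + p1 * (x+h) + p2 * (x+h)^2 + 0 * (x+h)^3) + (p0 + p1 * x + p2 * x^2 + 0 * x^3)); [ring|].
    rewrite Q0, Q1, Q2; ring. }
  assert (h2 : h^2 <> 0) by (apply pow_nonzero; lra).
  assert (Hp2 : p2 = 0) by (apply Rmult_eq_reg_r with (2 * h^2); [lra|nra]).
  subst p2.
  assert (E1 : p1 * h = 0).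
  { transitivity ((p0 + p1 * (x+h) + 0 * (x+h)^2 + 0 * (x+h)^3) - (p0 + p1 * x + 0 * x^2 + 0 * x^3)); [ring|].
    rewrite Q0, Q1; ring. }
  assert (Hp1 : p1 = 0) by (apply Rmult_eq_reg_r with h; lra).
  subst p1. repeat split; auto. rewrite <- Q0; ring.
Qed.

Lemma C3_ex a b h u : C3_on a b h -> inI a b u -> ex_derive h u /\ ex_derive (Derive h) u.
Proof. intros H Hu. destruct (H u Hu) as [H1 _]. split; [exact (H1 0%nat ltac:(lia)) | exact (H1 1%nat ltac:(lia))]. Qed.

Lemma delta_ex a b s e u : C3_curve_on a b s -> C3_curve_on a b e -> inI a b u -> ex_derive (delta s e) u.
Proof.
  intros [s1 [s2 s3]] [e1 [e2 e3]] Hu.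
  destruct (C3_ex _ _ _ _ s1 Hu), (C3_ex _ _ _ _ s2 Hu), (C3_ex _ _ _ _ s3 Hu).
  destruct (C3_ex _ _ _ _ e1 Hu), (C3_ex _ _ _ _ e2 Hu), (C3_ex _ _ _ _ e3 Hu).
  apply exd; unfold exv, vD, v1, v2, v3; simpl; unfold v1, v2, v3 in *; auto.
Qed.

Theorem proposition8 (s e : R -> vec) (f g : R -> R) (a b c d : Rbar) :
  Rbar_lt a b -> Rbar_lt c d ->
  C3_curve_on a b s -> C3_curve_on a b e ->
  standard_params a b s e ->
  (forall u, inI a b u -> delta s e u <> 0) ->
  (forall u, inI a b u -> ex_derive f u /\ ex_derive g u) ->
  (forall u v, inI a b u -> inI c d v -> qf s e f g u v <> 0) ->
  ~ (forall u, inI a b u -> f u = 0) ->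
  ~ (forall u, inI a b u -> g u = 0) ->
  ((forall u v, inI a b u -> inI c d v -> divI_T s e f g u v = 0) <->
   ((forall u, inI a b u -> kappa e u = 0) /\
    exists c2 : R, c2 <> 0 /\ (forall u, inI a b u -> delta s e u = c2) /\
    exists c1 : R, c1 <> 0 /\ (forall u, inI a b u -> g u = c1) /\
    exists (Lam : R -> R) (c3 : R),
      (forall u, inI a b u -> is_derive Lam u (lambda s e u)) /\
      (forall u, inI a b u -> f u = c1 * c2 * Lam u + c3))).
Proof.
  intros Hab Hcd Hs He _ Hd Hfg _ _ Hg0.
  assert (Hloc : forall u, inI a b u -> locally u (fun t => delta s e t <> 0)).
  { intros u Hu. apply (filter_imp (inI a b)); auto. apply inI_loc; auto. }
  assert (HdD : forall u, inI a b u -> ex_derive (delta s e) u).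
  { intros; eapply delta_ex; eauto. }
  split.
  - intros Hdiv.
    assert (Hco : forall u, inI a b u ->
      Derive g u = 0 /\ g u * Derive (delta s e) u = 0 /\ g u * kappa e u = 0 /\
      Derive f u / delta s e u - Derive (delta s e) u * f u / (2 * delta s e u ^ 2)
        + 3 * (g u * kappa e u) - g u * lambda s e u = 0).
    { intros u Hu.
      destruct (Hfg u Hu) as [Hf Hg].
      set (D := delta s e u). set (D1 := Derive (delta s e) u).
      set (f1 := Derive f u). set (g1 := Derive g u).
      set (K := kappa e u). set (L := lambda s e u).
      assert (HD : D <> 0) by (apply Hd; auto).
      destruct (cubic c d (2 * D * g1 + D1 * g u / 2) (f1 / D - D1 * f u / (2 * D^2) + 3 * (g u * K) - g u * L)
                  (3 * g1 / D) (3 * (g u * K) / D^2) Hcd) as [P0 [P1 [P2 P3]]].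
      { intros v Hv. assert (H0 := Hdiv u v Hu Hv).
        rewrite div_eq in H0 by auto. cbv zeta in H0. fold D D1 f1 g1 K L in H0.
        assert (HX : 0 < D^2 + v^2) by (assert (0 < D^2) by (apply pow2_gt_0; auto); nra).
        rewrite <- (Rmult_0_r (D^2+v^2)), <- H0. field. lra. }
      assert (G1 : g1 = 0).
      { apply Rmult_eq_reg_r with (3 / D). 2: { apply Rmult_integral_contrapositive; split; [lra| apply Rinv_neq_0_compat; auto]. }
        rewrite Rmult_0_l, <- P2. field. auto. }
      rewrite G1 in P0.
      assert (GK : g u * K = 0).
      { apply Rmult_eq_reg_r with (3 / D^2). 2: { apply Rmult_integral_contrapositive; split; [lra| apply Rinv_neq_0_compat; apply pow_nonzero; auto]. }
        rewrite Rmult_0_l, <- P3. field. auto. }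
      repeat split; auto. lra. }
    destruct (inI_ex a b Hab) as [u0 Hu0].
    assert (Hgc : forall u, inI a b u -> g u = g u0).
    { intros u Hu. apply (const_on a b); auto. intros t Ht.
      destruct (Hfg t Ht) as [_ Hg]. rewrite <- (proj1 (Hco t Ht)). apply Derive_correct; auto. }
    set (c1 := g u0).
    assert (Hc1 : c1 <> 0).
    { intro E. apply Hg0. intros u Hu. rewrite Hgc; auto. }
    assert (HK : forall u, inI a b u -> kappa e u = 0).
    { intros u Hu. destruct (Hco u Hu) as [_ [_ [H _]]]. rewrite Hgc in H; auto.
      apply Rmult_integral in H. destruct H; [contradiction|auto]. }
    assert (HD1 : forall u, inI a b u -> Derive (delta s e) u = 0).
    { intros u Hu. destruct (Hco u Hu) as [_ [H _]]. rewrite Hgc in H; auto.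
      apply Rmult_integral in H. destruct H; [contradiction|auto]. }
    assert (Hdc : forall u, inI a b u -> delta s e u = delta s e u0).
    { intros u Hu. apply (const_on a b); auto. intros t Ht.
      rewrite <- (HD1 t Ht). apply Derive_correct; auto. }
    set (c2 := delta s e u0).
    assert (Hc2 : c2 <> 0) by (apply Hd; auto).
    split; auto. exists c2. split; auto. split; auto. exists c1. split; auto. split; auto.
    exists (fun t => f t / (c1 * c2)), 0. split.
    + intros u Hu. destruct (Hco u Hu) as [_ [_ [_ H]]].
      destruct (Hfg u Hu) as [Hf _].
      rewrite (HK u Hu), (HD1 u Hu), (Hgc u Hu), (Hdc u Hu) in H. fold c1 c2 in H.
      auto_derive. { exact Hf. }
      change (fun x : R => f x) with f.
      replace (Derive f u) with (c2 * ((Derive f u / c2 - 0 * f u / (2 * c2 ^ 2) + 3 * (c1 * 0) - c1 * lambda s e u) + c1 * lambda s e u)) by (field; auto).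
      rewrite H. field. auto.
    + intros u Hu. field. auto.
  - intros [HK [c2 [Hc2 [Hdc [c1 [Hc1 [Hgc [Lam [c3 [HL Hf]]]]]]]]]] u v Hu Hv.
    destruct (Hfg u Hu) as [Hfx Hgx].
    rewrite div_eq; auto. cbv zeta.
    assert (HD1 : Derive (delta s e) u = 0).
    { rewrite (Derive_ext_loc _ (fun _ => c2)). apply Derive_const.
      apply (filter_imp (inI a b)); auto. apply inI_loc; auto. }
    assert (HG1 : Derive g u = 0).
    { rewrite (Derive_ext_loc _ (fun _ => c1)). apply Derive_const.
      apply (filter_imp (inI a b)); auto. apply inI_loc; auto. }
    assert (HF1 : Derive f u = c1 * c2 * lambda s e u).
    { apply is_derive_unique. apply (is_derive_ext_loc (fun t => c1 * c2 * Lam t + c3)).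
      { apply (filter_imp (inI a b)); [intros t Ht; symmetry; auto | apply inI_loc; auto]. }
      assert (HLu := HL u Hu).
      assert (ExL : ex_derive Lam u) by (eexists; eauto).
      auto_derive. { exact ExL. }
      change (fun x : R => Lam x) with Lam. rewrite (is_derive_unique _ _ _ HLu). ring. }
    rewrite HD1, HG1, HF1, (HK u Hu), (Hdc u Hu), (Hgc u Hu).
    assert (HX : 0 < c2^2 + v^2) by (assert (0 < c2^2) by (apply pow2_gt_0; auto); nra).
    field. split; [auto|lra].
Qed.
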